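(* Let $\mathbb X=\langle X,\rho\rangle$ and $\mathbb Y=\langle Y,\sigma\rangle$ be countable structures with $\rho,\sigma$ equivalence relations, each having infinitely many singleton classes and exactly one class of size $n$ for every $n\ge2$, and such that $\mathbb X$ has exactly one infinite class while $\mathbb Y$ has exactly two infinite classes. Then $\mathbb X\equiv\mathbb Y$ (elementary equivalence), $\mathbb X\sim_c\mathbb Y$, and $\mathbb X\not\equiv_{\infty\omega}\mathbb Y$.
   Context: A condensation from $\langle X,\rho\rangle$ onto $\langle Y,\sigma\rangle$ is a bijection $F:X\to Y$ with $x\,\rho\,x'\Rightarrow F(x)\,\sigma\,F(x')$; $\mathbb X\sim_c\mathbb Y$ means condensations exist in both directions. $\equiv$ is first order elementary equivalence and $\equiv_{\infty\omega}$ is equivalence with respect to all $L_{\infty\omega}$-sentences (language with one binary relation symbol). *)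

(* Defs.v *)
From Stdlib Require Import Arith List RelationClasses.
Import ListNotations.

Definition countable (X : Type) : Prop :=
  exists f : X -> nat, forall x y, f x = f y -> x = y.

Definition class_size {X : Type} (rho : X -> X -> Prop) (x : X) (n : nat) : Prop :=
  exists l : list X, NoDup l /\ length l = n /\ forall y, rho x y <-> In y l.

Definition infinite_class {X : Type} (rho : X -> X -> Prop) (x : X) : Prop :=
  ~ exists l : list X, forall y, rho x y -> In y l.

Definition inf_many_singletons {X : Type} (rho : X -> X -> Prop) : Prop :=
  ~ exists l : list X, forall x, (forall y, rho x y -> y = x) -> In x l.

Definition one_class_each_size {X : Type} (rho : X -> X -> Prop) : Prop :=
  forall n, 2 <= n ->
    exists x, class_size rho x n /\ forall x', class_size rho x' n -> rho x x'.

Definition exactly_one_infinite_class {X : Type} (rho : X -> X -> Prop) : Prop :=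
  exists x, infinite_class rho x /\ forall z, infinite_class rho z -> rho x z.

Definition exactly_two_infinite_classes {X : Type} (rho : X -> X -> Prop) : Prop :=
  exists x1 x2, infinite_class rho x1 /\ infinite_class rho x2 /\ ~ rho x1 x2 /\
    forall z, infinite_class rho z -> rho x1 z \/ rho x2 z.

Definition condensation {X Y : Type} (rho : X -> X -> Prop) (sigma : Y -> Y -> Prop)
  (F : X -> Y) : Prop :=
  (forall x x', F x = F x' -> x = x') /\ (forall y, exists x, F x = y) /\
  (forall x x', rho x x' -> sigma (F x) (F x')).

Definition condenses {X Y : Type} (rho : X -> X -> Prop) (sigma : Y -> Y -> Prop) : Prop :=
  exists F : X -> Y, condensation rho sigma F.

Definition scons {X : Type} (x : X) (e : nat -> X) : nat -> X :=
  fun n => match n with 0 => x | S k => e k end.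

Inductive form : Type :=
  | FRel : nat -> nat -> form
  | FEq : nat -> nat -> form
  | FNeg : form -> form
  | FAnd : form -> form -> form
  | FEx : form -> form.

Fixpoint closed_at (n : nat) (p : form) : Prop :=
  match p with
  | FRel i j | FEq i j => i < n /\ j < n
  | FNeg q => closed_at n q
  | FAnd q r => closed_at n q /\ closed_at n r
  | FEx q => closed_at (S n) q
  end.

Definition sentence (p : form) : Prop := closed_at 0 p.

Fixpoint sat {X : Type} (rho : X -> X -> Prop) (e : nat -> X) (p : form) : Prop :=
  match p with
  | FRel i j => rho (e i) (e j)
  | FEq i j => e i = e j
  | FNeg q => ~ sat rho e q
  | FAnd q r => sat rho e q /\ sat rho e r
  | FEx q => exists x, sat rho (scons x e) q
  end.

(* a sentence holds in a structure (structures here are nonempty) *)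
Definition models {X : Type} (rho : X -> X -> Prop) (p : form) : Prop :=
  forall e : nat -> X, sat rho e p.

Definition elem_equiv {X Y : Type} (rho : X -> X -> Prop) (sigma : Y -> Y -> Prop) : Prop :=
  forall p, sentence p -> (models rho p <-> models sigma p).

Inductive iform : Type :=
  | IRel : nat -> nat -> iform
  | IEq : nat -> nat -> iform
  | INeg : iform -> iform
  | IConj : forall (I : Type), (I -> iform) -> iform
  | IEx : iform -> iform.

Fixpoint iclosed_at (n : nat) (p : iform) : Prop :=
  match p with
  | IRel i j | IEq i j => i < n /\ j < n
  | INeg q => iclosed_at n q
  | IConj J f => forall i : J, iclosed_at n (f i)
  | IEx q => iclosed_at (S n) q
  end.

Definition isentence (p : iform) : Prop := iclosed_at 0 p.

Fixpoint isat {X : Type} (rho : X -> X -> Prop) (e : nat -> X) (p : iform) : Prop :=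
  match p with
  | IRel i j => rho (e i) (e j)
  | IEq i j => e i = e j
  | INeg q => ~ isat rho e q
  | IConj J f => forall i : J, isat rho e (f i)
  | IEx q => exists x, isat rho (scons x e) q
  end.

Definition imodels {X : Type} (rho : X -> X -> Prop) (p : iform) : Prop :=
  forall e : nat -> X, isat rho e p.

Definition linf_equiv {X Y : Type} (rho : X -> X -> Prop) (sigma : Y -> Y -> Prop) : Prop :=
  forall p, isentence p -> (imodels rho p <-> imodels sigma p).

(* Main.v *)
Require Import Defs.
From Stdlib Require Import Arith List RelationClasses Lia Classical ClassicalEpsilon.
Import ListNotations.

Definition ge {X} (rho : X -> X -> Prop) (x : X) (m : nat) : Prop :=
  exists l : list X, NoDup l /\ length l = m /\ forall y, In y l -> rho x y.

Lemma ge_S {X} (rho : X -> X -> Prop) x m : ge rho x (S m) -> ge rho x m.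
Proof.
  intros [l [Hn [Hl Hr]]]. destruct l as [|a l]; [discriminate|].
  exists l. inversion Hn; subst. split; [auto|]. split; [simpl in Hl; lia|].
  intros y Hy; apply Hr; simpl; auto.
Qed.

Lemma ge_down {X} (rho : X -> X -> Prop) x m m' : ge rho x m -> m' <= m -> ge rho x m'.
Proof.
  intros H Hle. induction Hle; auto. apply IHHle. apply ge_S; auto.
Qed.

Lemma ge_resp {X} (rho : X -> X -> Prop) `{Equivalence X rho} x x' m :
  rho x x' -> ge rho x m -> ge rho x' m.
Proof.
  intros Hxx [l [Hn [Hl Hr]]]. exists l. repeat split; auto.
  intros y Hy. transitivity x; [symmetry; auto|auto].
Qed.

Lemma class_size_ge {X} (rho : X -> X -> Prop) x n m :
  class_size rho x n -> (ge rho x m <-> m <= n).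
Proof.
  intros [l [Hn [Hl Hr]]]. split.
  - intros [l' [Hn' [Hl' Hr']]]. subst. apply NoDup_incl_length; auto.
    intros y Hy. apply Hr. auto.
  - intros Hm. apply ge_down with n; auto. exists l. repeat split; auto.
    intros y Hy; apply Hr; auto.
Qed.

Lemma ge_class {X} (rho : X -> X -> Prop) x m :
  ge rho x m -> ~ ge rho x (S m) -> class_size rho x m.
Proof.
  intros [l [Hn [Hl Hr]]] Hns. exists l. repeat split; auto.
  intros Hy. destruct (classic (In y l)) as [|Hni]; auto. exfalso. apply Hns.
  exists (y :: l). repeat split; simpl; auto. constructor; auto.
  intros z [<-|Hz]; auto.
Qed.

Lemma class_size_resp {X} (rho : X -> X -> Prop) `{Equivalence X rho} x x' n :
  rho x x' -> class_size rho x n -> class_size rho x' n.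
Proof.
  intros Hxx [l [Hn [Hl Hr]]]. exists l. repeat split; auto.
  - intros Hy. apply Hr. transitivity x'; auto.
  - intros Hy. apply Hr in Hy. transitivity x; auto. symmetry; auto.
Qed.

Lemma class_size_uniq {X} (rho : X -> X -> Prop) x n m :
  class_size rho x n -> class_size rho x m -> n = m.
Proof.
  intros H1 H2.
  assert (n <= m). { apply (class_size_ge rho x m n H2). apply (class_size_ge rho x n n H1). lia. }
  assert (m <= n). { apply (class_size_ge rho x n m H1). apply (class_size_ge rho x m m H2). lia. }
  lia.
Qed.

Lemma ge_0 {X} (rho : X -> X -> Prop) x : ge rho x 0.
Proof. exists []. repeat split; simpl; auto. constructor. intros y []. Qed.

Lemma ge_1 {X} (rho : X -> X -> Prop) `{Equivalence X rho} x : ge rho x 1.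
Proof. exists [x]. repeat split; simpl; auto. constructor; auto. constructor.
  intros y [<-|[]]. reflexivity. Qed.

Lemma find_thr (P : nat -> Prop) T : P 0 -> P 1 -> ~ P T ->
  exists m, 1 <= m /\ m < T /\ P m /\ ~ P (S m).
Proof.
  intros H0 H1. induction T; intros HT. { contradiction. }
  destruct (classic (P T)) as [HP|HP].
  - destruct T. { contradiction. } exists (S T). repeat split; auto; lia.
  - destruct (IHT HP) as [m ?]. exists m. intuition lia.
Qed.

Lemma cover_nodup {X} (Q : X -> Prop) l : (forall y, Q y -> In y l) ->
  exists l', NoDup l' /\ forall y, Q y <-> In y l'.
Proof.
  revert Q. induction l as [|a l IH]; intros Q HQ.
  - exists []. split; [constructor|]. intros y; split; [apply HQ|intros []].
  - destruct (IH (fun y => Q y /\ y <> a)) as [l' [Hn Hl']].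
    { intros y [Hy Hne]. destruct (HQ y Hy) as [->|]; [congruence|auto]. }
    destruct (classic (Q a)) as [Ha|Ha].
    + exists (a :: l'). split.
      * constructor; auto. intros Hin. apply Hl' in Hin. tauto.
      * intros y; split.
        -- intros Hy. destruct (classic (y = a)) as [->|Hne]; simpl; auto.
           right. apply Hl'. auto.
        -- intros [<-|Hin]; auto. apply Hl' in Hin. tauto.
    + exists l'. split; auto. intros y; split.
      * intros Hy. apply Hl'. split; auto. intros ->. contradiction.
      * intros Hin. apply Hl' in Hin. tauto.
Qed.

Definition Rel {X Y} (rho : X->X->Prop) (sigma : Y->Y->Prop) (T n : nat)
  (e : nat -> X) (f : nat -> Y) : Prop :=
  (forall i j, i < n -> j < n -> (e i = e j <-> f i = f j)) /\
  (forall i j, i < n -> j < n -> (rho (e i) (e j) <-> sigma (f i) (f j))) /\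
  (forall i m, i < n -> m <= T -> (ge rho (e i) m <-> ge sigma (f i) m)).

Lemma Rel_sym {X Y} rho sigma T n (e : nat -> X) (f : nat -> Y) :
  Rel rho sigma T n e f -> Rel sigma rho T n f e.
Proof.
  intros [H1 [H2 H3]]. repeat split; intros.
  all: first [apply H1|apply H2|apply H3]; auto.
Qed.

Lemma far_class {Y} (sigma : Y -> Y -> Prop) `{Equivalence Y sigma} :
  one_class_each_size sigma ->
  forall L T, exists y s, T <= s /\ class_size sigma y s /\ forall z, In z L -> ~ sigma y z.
Proof.
  intros Hone L. induction L as [|z L IH]; intros T.
  - destruct (Hone (T + 2)) as [y [Hy _]]. lia. exists y, (T+2). repeat split; auto. lia.
  - destruct (IH T) as [y1 [s1 [Hs1 [Hc1 Hn1]]]].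
    destruct (classic (sigma y1 z)) as [Hz|Hz].
    + destruct (IH (S s1)) as [y2 [s2 [Hs2 [Hc2 Hn2]]]].
      exists y2, s2. repeat split; [lia|auto|].
      intros w [Hzw|Hw]; auto. subst w. intros Hyw.
      assert (H12 : sigma y1 y2) by (transitivity z; [auto|symmetry; auto]).
      assert (Hc21 : class_size sigma y2 s1) by (eapply class_size_resp; eauto).
      pose proof (class_size_uniq _ _ _ _ Hc21 Hc2). lia.
    + exists y1, s1. repeat split; auto. intros w [<-|Hw]; auto.
Qed.

Lemma idx_list {X} (f : nat -> X) n lb :
  (forall y, In y lb -> exists j, j < n /\ f j = y) ->
  exists js, map f js = lb /\ forall j, In j js -> j < n.
Proof.
  induction lb as [|a lb IH]; intros H.
  - exists []. split; auto. intros j [].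
  - destruct (H a) as [j [Hj <-]]. simpl; auto.
    destruct IH as [js [Hm Hjs]]. intros y Hy; apply H; simpl; auto.
    exists (j :: js). simpl. rewrite Hm. split; auto. intros k [<-|Hk]; auto.
Qed.

Lemma nodup_transfer {X Y} (e : nat -> X) (f : nat -> Y) js :
  NoDup (map f js) -> (forall j j', In j js -> In j' js -> e j = e j' -> f j = f j') ->
  NoDup (map e js).
Proof.
  induction js as [|a js IH]; intros Hn He; simpl in *. constructor.
  inversion Hn; subst. constructor.
  - intros Hin. apply in_map_iff in Hin. destruct Hin as [j' [Hj' Hin]].
    apply H1. apply in_map_iff. exists j'. split; [symmetry; apply He; auto|auto].
  - apply IH; auto.
Qed.

Lemma seq_in {X} (f : nat -> X) n y : In y (map f (seq 0 n)) <-> exists j, j < n /\ f j = y.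
Proof.
  rewrite in_map_iff. split.
  - intros [j [<- Hj]]. apply in_seq in Hj. exists j. split; [lia|auto].
  - intros [j [Hj <-]]. exists j. split; auto. apply in_seq. lia.
Qed.

Section Forth.
Context {X Y : Type} (rho : X -> X -> Prop) (sigma : Y -> Y -> Prop)
  (Erho : Equivalence rho) (Esig : Equivalence sigma)
  (Hsing : inf_many_singletons sigma)
  (Hone1 : one_class_each_size rho) (Hone2 : one_class_each_size sigma).

Lemma forth T n e f : Rel rho sigma T n e f -> n < T -> forall x,
  exists y, Rel rho sigma T (S n) (scons x e) (scons y f).
Proof.
  intros HR HnT x. pose proof HR as [R1 [R2 R3]].
  destruct (classic (exists i, i < n /\ rho (e i) x)) as [[i [Hi Hix]]|Hnew].
  - destruct (classic (exists j, j < n /\ e j = x)) as [[j [Hj <-]]|Hnot].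
    + exists (f j). unfold Rel; split; [|split]; intros a b Ha Hb.
      all: destruct a as [|a]; destruct b as [|b]; simpl; try (apply R1 || apply R2 || apply R3); try lia.
      all: try tauto.
      all: try (split; intros; reflexivity).
    +
      assert (Hy : exists y, sigma (f i) y /\ forall j, j < n -> f j <> y).
      { apply NNPP. intros Hno.
        assert (Hcov : forall y, sigma (f i) y -> In y (map f (seq 0 n))).
        { intros y Hy. apply seq_in. apply NNPP. intros Hn2. apply Hno. exists y.
          split; auto. intros j Hj Hfj. apply Hn2. eauto. }
        destruct (cover_nodup _ _ Hcov) as [lb [Hlb Hlbc]].
        set (s := length lb).
        assert (Hcs : class_size sigma (f i) s) by (exists lb; auto).
        assert (Hsn : s <= n).
        { assert (Hll : length lb <= length (map f (seq 0 n))).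
          { apply NoDup_incl_length; auto. intros y Hy. apply Hcov. apply Hlbc; auto. }
          rewrite length_map, length_seq in Hll. unfold s; lia. }
        assert (Hge1 : ge rho (e i) s). { apply R3; [auto|lia|]. apply (class_size_ge _ _ _ _ Hcs). lia. }
        assert (Hge2 : ~ ge rho (e i) (S s)).
        { rewrite (R3 i (S s)); [|auto|lia]. rewrite (class_size_ge _ _ _ _ Hcs). lia. }
        destruct (idx_list f n lb) as [js [Hjs Hjsn]].
        { intros y Hy. apply seq_in. apply Hcov. apply Hlbc; auto. }
        assert (Hnd : NoDup (map e js)).
        { apply nodup_transfer with f. rewrite Hjs; auto.
          intros a b Ha Hb. apply R1; auto. }
        assert (Hrel : forall z, In z (map e js) -> rho (e i) z).
        { intros z Hz. apply in_map_iff in Hz. destruct Hz as [j [<- Hj]].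
          apply R2; auto. apply Hlbc. rewrite <- Hjs. apply in_map; auto. }
        assert (Hlen : length (map e js) = s).
        { unfold s. rewrite <- Hjs, !length_map. auto. }
        destruct (classic (In x (map e js))) as [Hin|Hnin].
        - apply in_map_iff in Hin. destruct Hin as [j [Hej Hj]].
          apply Hnot. exists j. split; auto.
        - apply Hge2. exists (x :: map e js). repeat split; simpl; auto.
          + constructor; auto.
          + intros z [<-|Hz]; auto. }
      destruct Hy as [y [Hy Hyn]].
      assert (Hxr : forall z, rho x z <-> rho (e i) z).
      { intros z; split; intros; [transitivity x|transitivity (e i); [symmetry|]]; auto. }
      assert (Hyr : forall z, sigma y z <-> sigma (f i) z).
      { intros z; split; intros; [transitivity y|transitivity (f i); [symmetry|]]; auto. }
      exists y. unfold Rel; split; [|split]; intros a b Ha Hb.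
      all: destruct a as [|a]; try destruct b as [|b]; simpl.
      all: try (split; intros; reflexivity).
      all: try (apply R1 || apply R2 || apply R3; lia).
      * split; intros Heq; exfalso; [apply Hnot; exists b; split; [lia|congruence] | apply (Hyn b); [lia|congruence]].
      * split; intros Heq; exfalso; [apply Hnot; exists a; split; [lia|congruence] | apply (Hyn a); [lia|congruence]].
      * rewrite Hxr, Hyr. apply R2; lia.
      * split; intros Hr; symmetry.
        -- apply Hyr. apply (proj1 (R2 i a Hi ltac:(lia))). apply Hxr. symmetry; exact Hr.
        -- apply Hxr. apply (proj2 (R2 i a Hi ltac:(lia))). apply Hyr. symmetry; exact Hr.
      * split; intros; apply ge_0.
      * split; intros Hg.
        -- apply ge_resp with (f i); auto. apply R3; [lia|auto|]. apply ge_resp with x; auto. symmetry; auto.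
        -- apply ge_resp with (e i); auto. apply R3; [lia|auto|]. apply ge_resp with y; auto. symmetry; auto.
  - assert (Hx : forall i, i < n -> ~ rho (e i) x) by (intros i Hi Hr; apply Hnew; eauto).
    assert (Hy : exists y, (forall j, j < n -> ~ sigma (f j) y) /\
               forall m, m <= T -> (ge rho x m <-> ge sigma y m)).
    { destruct (classic (ge rho x T)) as [HT|HT].
      - destruct (far_class sigma Hone2 (map f (seq 0 n)) T) as [y [s [Hs [Hc Hn]]]].
        exists y. split.
        + intros j Hj Hr. apply (Hn (f j)). apply seq_in; eauto. symmetry; auto.
        + intros m Hm. split; intros _.
          * apply (class_size_ge _ _ _ _ Hc). lia.
          * apply ge_down with T; auto.
      - destruct (find_thr (ge rho x) T (ge_0 _ _) (ge_1 _ _) HT) as [m [Hm1 [HmT [Hg Hng]]]].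
        pose proof (ge_class _ _ _ Hg Hng) as Hcx.
        destruct (classic (m = 1)) as [->|Hm2].
        + assert (Hs : exists y, (forall z, sigma y z -> z = y) /\ ~ In y (map f (seq 0 n))).
          { apply NNPP. intros Hno. apply Hsing. exists (map f (seq 0 n)).
            intros y Hy. apply NNPP. intros Hin. apply Hno. eauto. }
          destruct Hs as [y [Hys Hyn]].
          assert (Hcy : class_size sigma y 1).
          { exists [y]. repeat split; simpl; auto. constructor; auto. constructor.
            intros Hr. left. symmetry. apply Hys; auto. intros [<-|[]]. reflexivity. }
          exists y. split.
          * intros j Hj Hr. apply Hyn. apply seq_in. exists j. split; auto.
            apply Hys. symmetry. auto.
          * intros k Hk. rewrite (class_size_ge _ _ _ _ Hcx), (class_size_ge _ _ _ _ Hcy). tauto.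
        + destruct (Hone2 m) as [y [Hcy _]]. lia.
          exists y. split.
          * intros j Hj Hr.
            assert (Hcf : class_size sigma (f j) m) by (eapply class_size_resp; [|symmetry; apply Hr|]; eauto).
            assert (Hce : class_size rho (e j) m).
            { apply ge_class.
              - apply R3; [auto|lia|]. apply (class_size_ge _ _ _ _ Hcf). lia.
              - rewrite (R3 j (S m)); [|auto|lia]. rewrite (class_size_ge _ _ _ _ Hcf). lia. }
            destruct (Hone1 m) as [x0 [_ Hu]]. lia.
            apply (Hx j Hj). transitivity x0; [symmetry; apply Hu|apply Hu]; auto.
          * intros k Hk. rewrite (class_size_ge _ _ _ _ Hcx), (class_size_ge _ _ _ _ Hcy). tauto. }
    destruct Hy as [y [Hyn Hyg]].
    exists y. unfold Rel; split; [|split]; intros a b Ha Hb.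
    all: destruct a as [|a]; try destruct b as [|b]; simpl.
    all: try (split; intros; reflexivity).
    all: try (apply R1 || apply R2 || apply R3; lia).
    all: try (apply Hyg; auto; fail).
    all: split; intros Hq; exfalso.
    all: first [ apply (Hx b); [lia|]; rewrite <- Hq; reflexivity
               | apply (Hyn b); [lia|]; rewrite <- Hq; reflexivity
               | apply (Hx a); [lia|]; rewrite Hq; reflexivity
               | apply (Hyn a); [lia|]; rewrite Hq; reflexivity
               | apply (Hx b); [lia|]; symmetry; exact Hq
               | apply (Hyn b); [lia|]; symmetry; exact Hq
               | apply (Hx a); [lia|]; exact Hq
               | apply (Hyn a); [lia|]; exact Hq ].
Qed.
End Forth.

Fixpoint qd (p : form) : nat :=
  match p with
  | FRel _ _ | FEq _ _ => 0
  | FNeg q => qd q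
  | FAnd q r => Nat.max (qd q) (qd r)
  | FEx q => S (qd q)
  end.

Lemma sat_rel {X Y} (rho : X -> X -> Prop) (sigma : Y -> Y -> Prop)
  (Erho : Equivalence rho) (Esig : Equivalence sigma)
  (Hs1 : inf_many_singletons rho) (Hs2 : inf_many_singletons sigma)
  (Hone1 : one_class_each_size rho) (Hone2 : one_class_each_size sigma) T :
  forall p n e f, closed_at n p -> n + qd p <= T -> Rel rho sigma T n e f ->
  (sat rho e p <-> sat sigma f p).
Proof.
  induction p as [i j|i j|q IH|q IHq r IHr|q IH]; intros n e f Hc Hd HR; simpl in *.
  - destruct HR as [_ [R2 _]]. apply R2; tauto.
  - destruct HR as [R1 _]. apply R1; tauto.
  - rewrite (IH n e f); tauto.
  - rewrite (IHq n e f), (IHr n e f); try tauto; lia.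
  - split.
    + intros [x Hx]. destruct (forth rho sigma Erho Esig Hs2 Hone1 Hone2 T n e f HR ltac:(lia) x) as [y Hy].
      exists y. apply (IH (S n) _ _ Hc ltac:(lia) Hy). auto.
    + intros [y Hy].
      destruct (forth sigma rho Esig Erho Hs1 Hone2 Hone1 T n f e (Rel_sym _ _ _ _ _ _ HR) ltac:(lia) y) as [x Hx].
      exists x. apply (IH (S n) _ _ Hc ltac:(lia) (Rel_sym _ _ _ _ _ _ Hx)). auto.
Qed.

Lemma nonempty_of_sing {X} (rho : X -> X -> Prop) : inf_many_singletons rho -> exists x : X, True.
Proof.
  intros H. apply NNPP. intros Hn. apply H. exists []. intros x _. exfalso; eauto.
Qed.

Lemma elem_equiv_thm {X Y} (rho : X -> X -> Prop) (sigma : Y -> Y -> Prop)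
  (Erho : Equivalence rho) (Esig : Equivalence sigma)
  (Hs1 : inf_many_singletons rho) (Hs2 : inf_many_singletons sigma)
  (Hone1 : one_class_each_size rho) (Hone2 : one_class_each_size sigma) :
  elem_equiv rho sigma.
Proof.
  intros p Hp.
  assert (HR : forall e f, Rel rho sigma (qd p) 0 e f).
  { intros e f. unfold Rel; split; [|split]; intros; lia. }
  destruct (nonempty_of_sing _ Hs1) as [x0 _].
  destruct (nonempty_of_sing _ Hs2) as [y0 _].
  split; intros H e.
  - apply (sat_rel rho sigma Erho Esig Hs1 Hs2 Hone1 Hone2 (qd p) p 0 (fun _ => x0) e Hp ltac:(lia) (HR _ _)). apply H.
  - apply (sat_rel rho sigma Erho Esig Hs1 Hs2 Hone1 Hone2 (qd p) p 0 e (fun _ => y0) Hp ltac:(lia) (HR _ _)). apply H.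
Qed.

Definition itrue : iform := IConj Empty_set (fun e => match e with end).
Definition iand (p q : iform) : iform := IConj bool (fun b => if b then p else q).

Fixpoint G (m c d : nat) : iform :=
  match m with
  | 0 => itrue
  | S m => IEx (iand (IRel (S c) 0)
                 (iand (IConj nat (fun i => if i <? d then INeg (IEq 0 (S i)) else itrue))
                       (G m (S c) (S d))))
  end.

Lemma G_closed m : forall c d n, c < n -> d <= n -> iclosed_at n (G m c d).
Proof.
  induction m; intros c d n Hc Hd; simpl.
  - intros [].
  - intros [|]; [simpl; lia|]. intros [|]; simpl.
    + intros i. destruct (i <? d) eqn:E; simpl. apply Nat.ltb_lt in E. lia. intros [].
    + apply IHm; lia.
Qed.

Lemma G_sat {X} (rho : X -> X -> Prop) m : forall c d e,
  isat rho e (G m c d) <->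
  exists l, NoDup l /\ length l = m /\ forall z, In z l -> rho (e c) z /\ forall i, i < d -> z <> e i.
Proof.
  induction m; intros c d e; simpl.
  - split.
    + intros _. exists []. split; [constructor|]. split; auto. intros z [].
    + intros _ [].
  - split.
    + intros [x Hx]. pose proof (Hx true) as H1. pose proof (Hx false) as H2. simpl in H1, H2.
      pose proof (H2 true) as H3. pose proof (H2 false) as H4. simpl in H3, H4.
      apply IHm in H4. destruct H4 as [l [Hn [Hl Hr]]].
      exists (x :: l). split; [|split; [simpl; auto|]].
      * constructor; auto. intros Hin. apply Hr in Hin. destruct Hin as [_ Hne].
        apply (Hne 0); auto. lia.
      * intros z [<-|Hz].
        -- split; auto. intros i Hi. pose proof (H3 i) as Hi'. simpl in Hi'.
           rewrite (proj2 (Nat.ltb_lt i d) Hi) in Hi'. simpl in Hi'. auto.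
        -- destruct (Hr z Hz) as [Hrz Hne]. simpl in Hrz. split; auto.
           intros i Hi. apply (Hne (S i)). lia.
    + intros [l [Hn [Hl Hr]]]. destruct l as [|x l]; [discriminate|].
      inversion Hn; subst. exists x. intros [|]; simpl.
      * apply (Hr x); simpl; auto.
      * intros [|]; simpl.
        -- intros i. destruct (i <? d) eqn:E; simpl; [|intros []].
           apply Nat.ltb_lt in E. apply (Hr x); simpl; auto.
        -- apply IHm. exists l. split; auto. split; auto.
           intros z Hz. destruct (Hr z) as [Hrz Hne]; simpl; auto. split; auto.
           intros [|i] Hi; simpl. intros ->. contradiction. apply Hne. lia.
Qed.

Definition Inf (c : nat) : iform := IConj nat (fun m => G m c 0).

Lemma infinite_ge {X} (rho : X -> X -> Prop) x :
  infinite_class rho x <-> forall m, ge rho x m.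
Proof.
  split.
  - intros H m. induction m.
    + exists []. split; [constructor|]. split; auto. intros _ [].
    + destruct IHm as [l [Hn [Hl Hr]]].
      assert (Hy : exists y, rho x y /\ ~ In y l).
      { apply NNPP. intros Hno. apply H. exists l. intros y Hy. apply NNPP. eauto. }
      destruct Hy as [y [Hy Hyl]]. exists (y :: l). split; [constructor; auto|].
      split; [simpl; auto|]. intros z [<-|Hz]; auto.
  - intros H [l Hl]. destruct (H (S (length l))) as [l' [Hn [Hlen Hr]]].
    assert (length l' <= length l) by (apply NoDup_incl_length; auto; intros y Hy; apply Hl, Hr; auto).
    lia.
Qed.

Lemma Inf_sat {X} (rho : X -> X -> Prop) c e :
  isat rho e (Inf c) <-> infinite_class rho (e c).
Proof.
  rewrite infinite_ge. unfold Inf. simpl. split.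
  - intros H m. apply (G_sat rho m c 0 e) in H. destruct H as [l [Hn [Hl Hr]]].
    exists l. split; auto. split; auto. intros z Hz. apply Hr; auto.
  - intros H m. apply G_sat. destruct (H m) as [l [Hn [Hl Hr]]]. exists l.
    split; auto. split; auto. intros z Hz. split; auto. intros; lia.
Qed.

Definition Phi : iform := IEx (IEx (iand (INeg (IRel 0 1)) (iand (Inf 0) (Inf 1)))).

Lemma Phi_closed : isentence Phi.
Proof.
  unfold isentence, Phi. simpl. intros [|]; simpl; [lia|].
  intros [|]; simpl; intros m; apply G_closed; lia.
Qed.

Lemma not_linf {X Y} (rho : X -> X -> Prop) (sigma : Y -> Y -> Prop)
  (Erho : Equivalence rho) (Esig : Equivalence sigma) (x0 : X) :
  exactly_one_infinite_class rho -> exactly_two_infinite_classes sigma ->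
  ~ linf_equiv rho sigma.
Proof.
  intros [xi [Hxi Hxu]] [y1 [y2 [H1 [H2 [H12 _]]]]] Heq.
  assert (HY : imodels sigma Phi).
  { intros e. simpl. exists y1. exists y2. intros [|]; simpl.
    - intros Hr. apply H12. symmetry; auto.
    - intros [|]; apply Inf_sat; simpl; auto. }
  apply (Heq Phi Phi_closed) in HY. specialize (HY (fun _ => x0)).
  simpl in HY. destruct HY as [a [b Hab]].
  pose proof (Hab true) as Hn. pose proof (Hab false) as Hi. simpl in Hn, Hi.
  pose proof (Hi true) as Ha. pose proof (Hi false) as Hb. simpl in Ha, Hb.
  apply Inf_sat in Ha. apply Inf_sat in Hb. simpl in Ha, Hb.
  apply Hn. transitivity xi; [symmetry|]; apply Hxu; auto.
Qed.

Definition bij {A B} (P : A -> Prop) (Q : B -> Prop) (R : A -> B -> Prop) :=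
  (forall a b, R a b -> P a /\ Q b) /\
  (forall a, P a -> exists b, R a b) /\
  (forall b, Q b -> exists a, R a b) /\
  (forall a b b', R a b -> R a b' -> b = b') /\
  (forall a a' b, R a b -> R a' b -> a = a').

Ltac spl := split; [|split; [|split; [|split]]].

Lemma bij_inv {A B} P Q (R : A -> B -> Prop) : bij P Q R -> bij Q P (fun b a => R a b).
Proof. intros [H1 [H2 [H3 [H4 H5]]]]. spl; eauto. intros b a Hr; apply H1 in Hr; tauto. Qed.

Lemma bij_comp {A B C} P Q S (R : A -> B -> Prop) (R' : B -> C -> Prop) :
  bij P Q R -> bij Q S R' -> bij P S (fun a c => exists b, R a b /\ R' b c).
Proof.
  intros [H1 [H2 [H3 [H4 H5]]]] [K1 [K2 [K3 [K4 K5]]]]. spl.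
  - intros a c [b [Hab Hbc]]. split; [apply (H1 _ _ Hab)|apply (K1 _ _ Hbc)].
  - intros a Ha. destruct (H2 a Ha) as [b Hb]. destruct (K2 b (proj2 (H1 _ _ Hb))) as [c Hc]. eauto.
  - intros c Hc. destruct (K3 c Hc) as [b Hb]. destruct (H3 b (proj1 (K1 _ _ Hb))) as [a Ha]. eauto.
  - intros a c c' [b [Hb Hc]] [b' [Hb' Hc']]. assert (b = b') by eauto. subst. eauto.
  - intros a a' c [b [Hb Hc]] [b' [Hb' Hc']]. assert (b = b') by eauto. subst. eauto.
Qed.

Lemma bij_ext {A B} P Q (R : A -> B -> Prop) P' Q' R' :
  bij P Q R -> (forall a, P a <-> P' a) -> (forall b, Q b <-> Q' b) ->
  (forall a b, R a b <-> R' a b) -> bij P' Q' R'.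
Proof.
  intros [H1 [H2 [H3 [H4 H5]]]] EP EQ ER. spl.
  - intros a b Hr. apply ER, H1 in Hr. split; [apply EP|apply EQ]; tauto.
  - intros a Ha. destruct (H2 a (proj2 (EP a) Ha)) as [b Hb]. exists b. apply ER; auto.
  - intros b Hb. destruct (H3 b (proj2 (EQ b) Hb)) as [a Ha]. exists a. apply ER; auto.
  - intros a b b' Hb Hb'. apply ER in Hb. apply ER in Hb'. eauto.
  - intros a a' b Hb Hb'. apply ER in Hb. apply ER in Hb'. eauto.
Qed.

Lemma bij_union {A B} P1 Q1 (R1 : A -> B -> Prop) P2 Q2 R2 :
  bij P1 Q1 R1 -> bij P2 Q2 R2 ->
  (forall a, P1 a -> P2 a -> False) -> (forall b, Q1 b -> Q2 b -> False) ->
  bij (fun a => P1 a \/ P2 a) (fun b => Q1 b \/ Q2 b) (fun a b => R1 a b \/ R2 a b).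
Proof.
  intros [H1 [H2 [H3 [H4 H5]]]] [K1 [K2 [K3 [K4 K5]]]] DP DQ. spl.
  - intros a b [Hr|Hr]; split; [left; apply (H1 _ _ Hr)|left; apply (H1 _ _ Hr)|right; apply (K1 _ _ Hr)|right; apply (K1 _ _ Hr)].
  - intros a [Ha|Ha]; [destruct (H2 a Ha)|destruct (K2 a Ha)]; eauto.
  - intros b [Hb|Hb]; [destruct (H3 b Hb)|destruct (K3 b Hb)]; eauto.
  - intros a b b' [Hr|Hr] [Hr'|Hr']; eauto; exfalso.
    + apply (DP a); [apply (H1 _ _ Hr)|apply (K1 _ _ Hr')].
    + apply (DP a); [apply (H1 _ _ Hr')|apply (K1 _ _ Hr)].
  - intros a a' b [Hr|Hr] [Hr'|Hr']; eauto; exfalso.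
    + apply (DQ b); [apply (H1 _ _ Hr)|apply (K1 _ _ Hr')].
    + apply (DQ b); [apply (H1 _ _ Hr')|apply (K1 _ _ Hr)].
Qed.

Lemma bij_big {A B} (P : nat -> A -> Prop) (Q : nat -> B -> Prop) R :
  (forall n, bij (P n) (Q n) (R n)) ->
  (forall n m a, P n a -> P m a -> n = m) -> (forall n m b, Q n b -> Q m b -> n = m) ->
  bij (fun a => exists n, P n a) (fun b => exists n, Q n b) (fun a b => exists n, R n a b).
Proof.
  intros H DP DQ. spl.
  - intros a b [n Hr]. split; exists n; apply (proj1 (H n) _ _ Hr).
  - intros a [n Ha]. destruct (proj1 (proj2 (H n)) a Ha). eauto.
  - intros b [n Hb]. destruct (proj1 (proj2 (proj2 (H n))) b Hb). eauto.
  - intros a b b' [n Hr] [m Hr'].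
    assert (n = m) by (apply (DP n m a); [apply (proj1 (H n) _ _ Hr)|apply (proj1 (H m) _ _ Hr')]).
    subst. apply (proj1 (proj2 (proj2 (proj2 (H m)))) a b b' Hr Hr').
  - intros a a' b [n Hr] [m Hr'].
    assert (n = m) by (apply (DQ n m b); [apply (proj1 (H n) _ _ Hr)|apply (proj1 (H m) _ _ Hr')]).
    subst. apply (proj2 (proj2 (proj2 (proj2 (H m)))) a a' b Hr Hr').
Qed.

Lemma bij_list {A B} (l1 : list A) (l2 : list B) :
  NoDup l1 -> NoDup l2 -> length l1 = length l2 ->
  bij (fun a => In a l1) (fun b => In b l2)
      (fun a b => exists j, nth_error l1 j = Some a /\ nth_error l2 j = Some b).
Proof.
  intros N1 N2 Hl. spl.
  - intros a b [j [H1 H2]]. split; eapply nth_error_In; eauto.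
  - intros a Ha. destruct (In_nth_error _ _ Ha) as [j Hj].
    assert (j < length l2). { rewrite <- Hl. apply nth_error_Some. congruence. }
    destruct (nth_error l2 j) as [b|] eqn:E. eauto. apply nth_error_Some in H. contradiction.
  - intros b Hb. destruct (In_nth_error _ _ Hb) as [j Hj].
    assert (j < length l1). { rewrite Hl. apply nth_error_Some. congruence. }
    destruct (nth_error l1 j) as [a|] eqn:E. eauto. apply nth_error_Some in H. contradiction.
  - intros a b b' [j [H1 H2]] [j' [H1' H2']].
    assert (j = j'). { apply (proj1 (NoDup_nth_error l1) N1). apply nth_error_Some; congruence. congruence. }
    congruence.
  - intros a a' b [j [H1 H2]] [j' [H1' H2']].
    assert (j = j'). { apply (proj1 (NoDup_nth_error l2) N2). apply nth_error_Some; congruence. congruence. }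
    congruence.
Qed.

Inductive cnt (D : nat -> Prop) : nat -> nat -> Prop :=
| cnt0 : cnt D 0 0
| cntT : forall c m, D c -> cnt D c m -> cnt D (S c) (S m)
| cntF : forall c m, ~ D c -> cnt D c m -> cnt D (S c) m.

Lemma cnt_ex D c : exists m, cnt D c m.
Proof.
  induction c. exists 0; constructor. destruct IHc as [m Hm].
  destruct (classic (D c)); eexists; [apply cntT|apply cntF]; eauto.
Qed.

Lemma cnt_fun D c m m' : cnt D c m -> cnt D c m' -> m = m'.
Proof.
  intros H. revert m'. induction H; intros m' H'; inversion H'; subst; auto; try contradiction; f_equal; auto.
Qed.

Lemma cnt_mono D c m d m' : cnt D c m -> cnt D (c + d) m' -> m <= m'.
Proof.
  intros H. revert m'. induction d; intros m' H'.
  - rewrite Nat.add_0_r in H'. rewrite (cnt_fun _ _ _ _ H H'). auto.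
  - rewrite Nat.add_succ_r in H'. inversion H' as [|c0 m0 HD Hc|c0 m0 HD Hc]; subst; specialize (IHd _ Hc); lia.
Qed.

Lemma cnt_below D c m : cnt D c m -> forall k, k < m -> exists c', c' < c /\ D c' /\ cnt D c' k.
Proof.
  induction 1; intros k Hk.
  - lia.
  - destruct (Nat.eq_dec k m) as [->|Hne]. exists c; auto.
    destruct (IHcnt k) as [c' ?]. lia. exists c'. intuition lia.
  - destruct (IHcnt k Hk) as [c' ?]. exists c'. intuition lia.
Qed.

Definition infinite {A} (P : A -> Prop) := ~ exists l, forall x, P x -> In x l.

Lemma bij_nat {A} (P : A -> Prop) : countable A -> infinite P ->
  exists R, bij (fun _ : nat => True) P R.
Proof.
  intros [g Hg] Hinf.
  set (D := fun c => exists x, P x /\ g x = c).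
  assert (Dinf : forall N, exists c, N <= c /\ D c).
  { intros N. apply NNPP. intros Hno. apply Hinf.
    assert (Hl : forall N', exists l, forall x, P x -> g x < N' -> In x l).
    { induction N'.
      - exists []. intros; lia.
      - destruct IHN' as [l Hl]. destruct (classic (D N')) as [[x0 [Hx0 Hg0]]|HnD].
        + exists (x0 :: l). intros x Hx Hgx. destruct (Nat.eq_dec (g x) N').
          * left. apply Hg. congruence.
          * right. apply Hl; auto. lia.
        + exists l. intros x Hx Hgx. destruct (Nat.eq_dec (g x) N').
          * exfalso. apply HnD. exists x. auto.
          * apply Hl; auto. lia. }
    destruct (Hl N) as [l Hl']. exists l. intros x Hx. apply Hl'; auto.
    destruct (Nat.lt_ge_cases (g x) N); auto. exfalso. apply Hno. exists (g x). split; auto.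
    exists x; auto. }
  assert (Hunb : forall k, exists c m, cnt D c m /\ k < m).
  { induction k.
    - destruct (Dinf 0) as [c0 [_ Hc0]]. destruct (cnt_ex D c0) as [m0 Hm0].
      exists (S c0), (S m0). split. apply cntT; auto. lia.
    - destruct IHk as [c [m [Hcm Hk]]]. destruct (Dinf c) as [c1 [Hc1 HD1]].
      destruct (cnt_ex D c1) as [m1 Hm1].
      assert (m <= m1). { apply (cnt_mono D c m (c1 - c)); auto. replace (c + (c1 - c)) with c1 by lia. auto. }
      exists (S c1), (S m1). split. apply cntT; auto. lia. }
  exists (fun k x => P x /\ cnt D (g x) k). spl.
  - intros k x [Hx _]; auto.
  - intros k _. destruct (Hunb k) as [c [m [Hcm Hkm]]].
    destruct (cnt_below D c m Hcm k Hkm) as [c' [_ [[x [Hx Hgx]] Hc']]].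
    exists x. subst. auto.
  - intros x Hx. destruct (cnt_ex D (g x)) as [k Hk]. eauto.
  - intros k x x' [Hx Hk] [Hx' Hk'].
    assert (Hlt : forall a b, P a -> cnt D (g a) k -> cnt D (g b) k -> g a < g b -> False).
    { intros a b Ha Hka Hkb Hab.
      assert (HS : cnt D (S (g a)) (S k)) by (apply cntT; auto; exists a; auto).
      pose proof (cnt_mono D (S (g a)) (S k) (g b - S (g a)) k HS ltac:(replace (S (g a) + (g b - S (g a))) with (g b) by lia; auto)).
      lia. }
    destruct (Nat.lt_trichotomy (g x) (g x')) as [H|[H|H]].
    + exfalso; eauto.
    + apply Hg; auto.
    + exfalso; eauto.
  - intros k k' x [_ Hk] [_ Hk']. eapply cnt_fun; eauto.
Qed.

Lemma bij_inf {A B} (P : A -> Prop) (Q : B -> Prop) : countable A -> countable B ->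
  infinite P -> infinite Q -> exists R, bij P Q R.
Proof.
  intros cA cB iP iQ. destruct (bij_nat P cA iP) as [R1 H1]. destruct (bij_nat Q cB iQ) as [R2 H2].
  eexists. eapply bij_comp. apply bij_inv. apply H1. apply H2.
Qed.

Definition singleton {X} (rho : X -> X -> Prop) x := forall y, rho x y -> y = x.

Definition LSpec {X} (rho : X -> X -> Prop) (L : nat -> list X) :=
  forall n, 2 <= n -> NoDup (L n) /\ length (L n) = n /\
    (forall u, In u (L n) -> forall u', rho u u' <-> In u' (L n)) /\
    (forall u, class_size rho u n -> In u (L n)).

Lemma LSpec_ex {X} (rho : X -> X -> Prop) `{Equivalence X rho} :
  one_class_each_size rho -> exists L, LSpec rho L.
Proof.
  intros Hone.
  assert (Hn : forall n, exists l, 2 <= n -> NoDup l /\ length l = n /\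
    (forall u, In u l -> forall u', rho u u' <-> In u' l) /\
    (forall u, class_size rho u n -> In u l)).
  { intros n. destruct (le_lt_dec 2 n) as [Hle|Hlt]; [|exists []; lia].
    destruct (Hone n Hle) as [r [[l [Hnd [Hl Hr]]] Hu]]. exists l. intros _.
    split; auto. split; auto. split.
    - intros u Hu' u'. apply Hr in Hu'. rewrite <- Hr. split; intros Hq.
      + transitivity u; auto.
      + transitivity r; auto. symmetry; auto.
    - intros u Hc. apply Hr. apply Hu; auto. }
  exists (fun n => proj1_sig (constructive_indefinite_description _ (Hn n))).
  intros n Hle. destruct (constructive_indefinite_description _ (Hn n)) as [l Hl]. simpl. auto.
Qed.

Section Props.
Context {X : Type} (rho : X -> X -> Prop) (E : Equivalence rho) (L : nat -> list X) (HL : LSpec rho L).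

Lemma L_class n u : 2 <= n -> In u (L n) -> class_size rho u n.
Proof.
  intros Hn Hu. destruct (HL n Hn) as [Hnd [Hl [Hc _]]]. exists (L n). split; [auto|split; [auto|]].
  apply Hc; auto.
Qed.

Lemma L_uniq n m u : 2 <= n -> 2 <= m -> In u (L n) -> In u (L m) -> n = m.
Proof. intros. eapply class_size_uniq; apply L_class; eauto. Qed.

Lemma L_notinf n u : 2 <= n -> In u (L n) -> ~ infinite_class rho u.
Proof.
  intros Hn Hu Hi. apply Hi. exists (L n). intros y Hy. destruct (HL n Hn) as [_ [_ [Hc _]]].
  apply (Hc u); auto.
Qed.

Lemma L_notsing n u : 2 <= n -> In u (L n) -> ~ singleton rho u.
Proof.
  intros Hn Hu Hs. destruct (HL n Hn) as [Hnd [Hl [Hc _]]].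
  destruct (L n) as [|a [|b l]] eqn:EL; simpl in Hl; try lia.
  assert (a = u) by (apply Hs; apply (Hc u Hu); simpl; auto).
  assert (b = u) by (apply Hs; apply (Hc u Hu); simpl; auto).
  subst. inversion Hnd. apply H1. simpl; auto.
Qed.

Lemma inf_notsing u : infinite_class rho u -> ~ singleton rho u.
Proof. intros Hi Hs. apply Hi. exists [u]. intros y Hy. left. symmetry. apply Hs; auto. Qed.

Lemma inf_resp u u' : rho u u' -> infinite_class rho u -> infinite_class rho u'.
Proof.
  intros Hr Hi [l Hl]. apply Hi. exists l. intros y Hy. apply Hl. transitivity u; [symmetry|]; auto.
Qed.

Lemma classify u : infinite_class rho u \/ singleton rho u \/ exists n, 2 <= n /\ In u (L n).
Proof.
  destruct (classic (infinite_class rho u)) as [|Hni]; auto. right.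
  apply NNPP in Hni. destruct Hni as [l Hl].
  destruct (cover_nodup (rho u) l Hl) as [l' [Hnd Hl']].
  assert (Hin : In u l') by (apply Hl'; reflexivity).
  destruct l' as [|a [|b l'']] eqn:EL.
  - destruct Hin.
  - left. intros y Hy. apply Hl' in Hy. destruct Hin as [<-|[]]. destruct Hy as [<-|[]]; auto.
  - right. exists (length l'). split. subst; simpl; lia.
    destruct (HL (length l')) as [_ [_ [_ Hu]]]. subst; simpl; lia.
    apply Hu. exists l'. subst l'. auto.
Qed.

Lemma L_resp n u u' : 2 <= n -> In u (L n) -> rho u u' -> In u' (L n).
Proof. intros Hn Hu Hr. destruct (HL n Hn) as [_ [_ [Hc _]]]. apply (Hc u); auto. Qed.

Lemma L_rel n u u' : 2 <= n -> In u (L n) -> In u' (L n) -> rho u u'.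
Proof. intros Hn Hu Hr. destruct (HL n Hn) as [_ [_ [Hc _]]]. apply (Hc u); auto. Qed.

End Props.

Lemma cond_generic {U V} (al : U -> U -> Prop) (be : V -> V -> Prop)
  (EU : Equivalence al) (EV : Equivalence be) LU LV (HLU : LSpec al LU) (HLV : LSpec be LV)
  (IU SU : U -> Prop) (IV SV : V -> Prop) :
  countable U -> countable V ->
  infinite IU -> infinite IV -> infinite SU -> infinite SV ->
  (forall u u', IU u -> al u u' -> IU u') ->
  (forall v v', IV v -> IV v' -> be v v') ->
  (forall u u', SU u -> al u u' -> u' = u) ->
  (forall u, IU u \/ SU u \/ exists n, 2 <= n /\ In u (LU n)) ->
  (forall v, IV v \/ SV v \/ exists n, 2 <= n /\ In v (LV n)) ->
  (forall u, IU u -> SU u -> False) ->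
  (forall u n, 2 <= n -> In u (LU n) -> IU u \/ SU u -> False) ->
  (forall v, IV v -> SV v -> False) ->
  (forall v n, 2 <= n -> In v (LV n) -> IV v \/ SV v -> False) ->
  condenses al be.
Proof.
  intros cU cV iIU iIV iSU iSV clIU clIV clSU covU covV dU1 dU2 dV1 dV2.
  destruct (bij_inf IU IV cU cV iIU iIV) as [R1 B1].
  destruct (bij_inf SU SV cU cV iSU iSV) as [R2 B2].
  set (R3 := fun n u v => 2 <= n /\ exists j, nth_error (LU n) j = Some u /\ nth_error (LV n) j = Some v).
  assert (B3 : forall n, bij (fun u => 2 <= n /\ In u (LU n)) (fun v => 2 <= n /\ In v (LV n)) (R3 n)).
  { intros n. destruct (le_lt_dec 2 n) as [Hn|Hn].
    - destruct (HLU n Hn) as [N1 [L1 _]]. destruct (HLV n Hn) as [N2 [L2 _]].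
      eapply bij_ext. apply (bij_list (LU n) (LV n) N1 N2 ltac:(lia)).
      all: intros; unfold R3; tauto.
    - spl; intros; unfold R3 in *; try lia; destruct H as [H _]; lia. }
  assert (B3' : bij (fun u => exists n, 2 <= n /\ In u (LU n)) (fun v => exists n, 2 <= n /\ In v (LV n))
                     (fun u v => exists n, R3 n u v)).
  { apply bij_big; auto.
    - intros n m u [H1 H2] [H3 H4]. eapply (L_uniq al); eauto.
    - intros n m v [H1 H2] [H3 H4]. eapply (L_uniq be); eauto. }
  assert (B12 := bij_union _ _ _ _ _ _ B1 B2 dU1 dV1).
  assert (B := bij_union _ _ _ _ _ _ B12 B3').
  simpl in B.
  assert (B0 : bij (fun _ => True) (fun _ => True)
     (fun u v => (R1 u v \/ R2 u v) \/ exists n, R3 n u v)).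
  { eapply bij_ext. apply B.
    - intros u a b. destruct b as [n [Hn Hu]]. apply (dU2 u n); auto.
    - intros v a b. destruct b as [n [Hn Hv]]. apply (dV2 v n); auto.
    - intros u; split; auto. intros _. destruct (covU u) as [|[|[n ?]]]; eauto.
    - intros v; split; auto. intros _. destruct (covV v) as [|[|[n ?]]]; eauto.
    - intros; tauto. }
  clear B B12 B3'.
  destruct B0 as [K1 [K2 [K3 [K4 K5]]]].
  set (RR := fun u v => (R1 u v \/ R2 u v) \/ exists n, R3 n u v) in *.
  exists (fun u => proj1_sig (constructive_indefinite_description _ (K2 u I))).
  split; [|split].
  - intros x x'. destruct (constructive_indefinite_description _ (K2 x I)) as [y Hy].
    destruct (constructive_indefinite_description _ (K2 x' I)) as [y' Hy']. simpl. intros <-. eauto.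
  - intros y. destruct (K3 y I) as [x Hx]. exists x.
    destruct (constructive_indefinite_description _ (K2 x I)) as [y' Hy']. simpl. eauto.
  - intros x x' Hxx. destruct (constructive_indefinite_description _ (K2 x I)) as [y Hy].
    destruct (constructive_indefinite_description _ (K2 x' I)) as [y' Hy']. simpl.
    destruct B1 as [P1 _]. destruct B2 as [P2 _].
    destruct Hy as [[Hy|Hy]|[n Hy]].
    + destruct (P1 _ _ Hy) as [Ix Iy]. assert (Ix' : IU x') by eauto.
      destruct Hy' as [[Hy'|Hy']|[m Hy']].
      * apply clIV; auto. apply (P1 _ _ Hy').
      * exfalso. apply (dU1 x'); auto. apply (P2 _ _ Hy').
      * exfalso. destruct (B3 m) as [P3 _]. destruct (P3 _ _ Hy') as [[Hm Hx'] _].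
        apply (dU2 x' m); auto.
    + destruct (P2 _ _ Hy) as [Sx _]. assert (x' = x) by eauto. subst x'.
      assert (y = y') by eauto. subst. reflexivity.
    + destruct (B3 n) as [P3 _]. destruct (P3 _ _ Hy) as [[Hn Hx] [_ Hyn]].
      assert (Hx' : In x' (LU n)) by (eapply L_resp; eauto).
      destruct Hy' as [[Hy'|Hy']|[m Hy']].
      * exfalso. apply (dU2 x' n); auto. left. apply (P1 _ _ Hy').
      * exfalso. apply (dU2 x' n); auto. right. apply (P2 _ _ Hy').
      * destruct (B3 m) as [P3' _]. destruct (P3' _ _ Hy') as [[Hm Hx'm] [_ Hym]].
        assert (n = m) by (eapply (L_uniq al); eauto). subst m.
        eapply (L_rel be); eauto.
Qed.

Theorem mainTheorem12 (X Y : Type) (rho : X -> X -> Prop) (sigma : Y -> Y -> Prop) :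
  countable X -> countable Y ->
  Equivalence rho -> Equivalence sigma ->
  inf_many_singletons rho -> inf_many_singletons sigma ->
  one_class_each_size rho -> one_class_each_size sigma ->
  exactly_one_infinite_class rho -> exactly_two_infinite_classes sigma ->
  elem_equiv rho sigma /\ (condenses rho sigma /\ condenses sigma rho) /\
  ~ linf_equiv rho sigma.
Proof.
  intros cX cY Er Es Sr Ss Or Os H1 H2.
  split; [apply elem_equiv_thm; auto|].
  destruct (nonempty_of_sing _ Sr) as [x0 _].
  split; [|apply (not_linf rho sigma Er Es x0 H1 H2)].
  destruct H1 as [xi [Hxi Hxu]]. destruct H2 as [y1 [y2 [Hy1 [Hy2 [H12 Hyu]]]]].
  destruct (LSpec_ex rho Or) as [LX HLX]. destruct (LSpec_ex sigma Os) as [LY HLY].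
  assert (iX : infinite (infinite_class rho)).
  { intros [l Hl]. apply Hxi. exists l. intros y Hy. apply Hl. eapply inf_resp; eauto. }
  assert (iY : infinite (infinite_class sigma)).
  { intros [l Hl]. apply Hy1. exists l. intros y Hy. apply Hl. eapply inf_resp; eauto. }
  split.
  - apply (cond_generic rho sigma Er Es LX LY HLX HLY (infinite_class rho) (singleton rho)
             (sigma y1) (fun y => singleton sigma y \/ sigma y2 y)); auto.
    + intros [l Hl]. apply Ss. exists l. intros y Hy. apply Hl. left. exact Hy.
    + intros u u' Hu Hr. eapply inf_resp; eauto.
    + intros v v' Hv Hv'. transitivity y1; [symmetry|]; auto.
    + intros u. apply (classify rho Er LX HLX).
    + intros v. destruct (classify sigma Es LY HLY v) as [Hi|[Hs|Hl]]; auto.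
      destruct (Hyu v Hi); auto.
    + intros u Hi Hs. eapply inf_notsing; eauto.
    + intros u n Hn Hu [Hi|Hs]; [eapply (L_notinf rho)|eapply (L_notsing rho)]; eauto.
    + intros v Hv [Hs|Hv2].
      * apply (inf_notsing sigma v); [eapply (inf_resp sigma Es y1); eauto|exact Hs].
      * apply H12. transitivity v; [|symmetry]; auto.
    + intros v n Hn Hv [Hv1|[Hs|Hv2]].
      * eapply (L_notinf sigma); eauto. eapply inf_resp; eauto.
      * eapply (L_notsing sigma); eauto.
      * eapply (L_notinf sigma); eauto. eapply inf_resp; eauto.
  - apply (cond_generic sigma rho Es Er LY LX HLY HLX (infinite_class sigma) (singleton sigma)
             (infinite_class rho) (singleton rho)); auto.
    + intros u u' Hu Hr. eapply inf_resp; eauto.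
    + intros v v' Hv Hv'. transitivity xi; [symmetry|]; auto.
    + intros u. apply (classify sigma Es LY HLY).
    + intros v. apply (classify rho Er LX HLX).
    + intros u Hi Hs. eapply inf_notsing; eauto.
    + intros u n Hn Hu [Hi|Hs]; [eapply (L_notinf sigma)|eapply (L_notsing sigma)]; eauto.
    + intros u Hi Hs. eapply inf_notsing; eauto.
    + intros u n Hn Hu [Hi|Hs]; [eapply (L_notinf rho)|eapply (L_notsing rho)]; eauto.
Qed.
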